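(* Let $R$ be a quotient root system with base $S$, $\Phi\subseteq R^+$ an inversion set, and $A,B,C$ connected components of $G_\Phi^{\Phi^c}$ with $A + B = C$. Then $\operatorname{supp} C = \operatorname{supp} A \cup \operatorname{supp} B$.
   Context: A quotient root system (QRS) $R$ is the set of non-zero images of a root system $\Delta$ (with base $\Sigma$) under the orthogonal projection of its ambient Euclidean space onto $(\mathrm{span}\,J)^\perp$ for some $J\subsetneq\Sigma$; its base $S$ consists of the images of $\Sigma\setminus J$, and every root is an integer combination of $S$ with all coefficients $\ge0$ (positive roots, $R^+$) or all $\le0$. The support of a root is the set of elements of $S$ with non-zero coefficient; the support of a set of roots is the union of the supports. $\Phi\subseteq R^+$ is closed if $\alpha,\beta\in\Phi$, $\alpha+\beta\in R$ imply $\alpha+\beta\in\Phi$; co-closed if $\Phi^c:=R^+\setminus\Phi$ is closed; an inversion set if both. $G_\Phi^{\Phi^c}$ is the graph with vertex set $\Phi$ in which $\alpha,\alpha'$ are adjacent iff $\alpha-\alpha'\in\Phi^c\cup(-\Phi^c)$; components are its connected components. Addition of components: for components $A,B$ let $Z=\{\alpha+\beta:\alpha\in A,\beta\in B\}\cap R$. If $Z\ne\emptyset$ lies in a single component $C$, $A+B:=C$. If $Z$ meets more than one component, then (as established in the paper) $A=B$ and $Z$ meets exactly two components, $A$ and some $C\ne A$; then $A+A:=C$. If $Z=\emptyset$, $A+B$ is undefined. *)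

(* Defs.v *)
From HB Require Import structures.
From mathcomp Require Import all_boot all_order all_algebra.
From mathcomp Require Import reals.
From Stdlib Require Import ClassicalEpsilon Relations.
Set Implicit Arguments. Unset Strict Implicit. Unset Printing Implicit Defensive.
Import GRing.Theory Num.Theory.
Local Open Scope ring_scope.

Definition dotv {R : realType} {n : nat} (u v : 'rV[R]_n) : R := (u *m v^T) 0 0.

Definition is_root_system {R : realType} {n : nat} (D : seq 'rV[R]_n) : Prop :=
  (0 \notin D) /\
  (forall a b, a \in D -> b \in D ->
     exists k : int, 2 * dotv a b / dotv a a = k%:~R) /\
  (forall a b, a \in D -> b \in D ->
     b - (2 * dotv a b / dotv a a) *: a \in D) /\
  (forall a (c : R), a \in D -> c *: a \in D -> c = 1 \/ c = -1).

Definition is_base {R : realType} {n m : nat} (D : seq 'rV[R]_n)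
    (b : 'I_m -> 'rV[R]_n) : Prop :=
  (forall i, b i \in D) /\
  (forall c : 'I_m -> R, \sum_i c i *: b i = 0 -> forall i, c i = 0) /\
  (forall a, a \in D -> exists c : 'I_m -> int,
       a = \sum_i (c i)%:~R *: b i /\
       ((forall i, (0 <= c i)%R) \/ (forall i, (c i <= 0)%R))).

Definition is_oproj {R : realType} {n m : nat} (b : 'I_m -> 'rV[R]_n)
    (J : {set 'I_m}) (v w : 'rV[R]_n) : Prop :=
  (forall j, j \in J -> dotv w (b j) = 0) /\
  exists c : 'I_m -> R, v - w = \sum_(j in J) c j *: b j.

(* The orthogonal projection as a function (it exists and is unique). *)
Definition oproj {R : realType} {n m : nat} (b : 'I_m -> 'rV[R]_n)
    (J : {set 'I_m}) (v : 'rV[R]_n) : 'rV[R]_n :=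
  epsilon (inhabits 0) (is_oproj b J v).

Definition qroot {R : realType} {n m : nat} (D : seq 'rV[R]_n)
    (b : 'I_m -> 'rV[R]_n) (J : {set 'I_m}) (w : 'rV[R]_n) : Prop :=
  w != 0 /\ exists a, a \in D /\ w = oproj b J a.

(* Base S of the QRS: the images of Sigma \ J, indexed by i \notin J. *)
Definition sbase {R : realType} {n m : nat} (b : 'I_m -> 'rV[R]_n)
    (J : {set 'I_m}) (i : 'I_m) : 'rV[R]_n := oproj b J (b i).

Definition is_coeffs {R : realType} {n m : nat} (b : 'I_m -> 'rV[R]_n)
    (J : {set 'I_m}) (w : 'rV[R]_n) (c : 'I_m -> int) : Prop :=
  w = \sum_(i | i \notin J) (c i)%:~R *: sbase b J i.

Definition qpos {R : realType} {n m : nat} (D : seq 'rV[R]_n)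
    (b : 'I_m -> 'rV[R]_n) (J : {set 'I_m}) (w : 'rV[R]_n) : Prop :=
  qroot D b J w /\
  exists c, is_coeffs b J w c /\ forall i, i \notin J -> (0 <= c i)%R.

Definition supp_root {R : realType} {n m : nat} (b : 'I_m -> 'rV[R]_n)
    (J : {set 'I_m}) (w : 'rV[R]_n) (i : 'I_m) : Prop :=
  i \notin J /\ exists c, is_coeffs b J w c /\ c i != 0.

Definition supp_set {R : realType} {n m : nat} (b : 'I_m -> 'rV[R]_n)
    (J : {set 'I_m}) (A : 'rV[R]_n -> Prop) (i : 'I_m) : Prop :=
  exists a, A a /\ supp_root b J a i.

(* Generic notions, relative to the root set Rs and positive roots Rp. *)
Definition closed_in {V : zmodType} (Rs : V -> Prop) (P : V -> Prop) : Prop :=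
  forall a c, P a -> P c -> Rs (a + c) -> P (a + c).

Definition compl_in {V : zmodType} (Rp : V -> Prop) (Phi : V -> Prop) (x : V) : Prop :=
  Rp x /\ ~ Phi x.

Definition inversion_set {V : zmodType} (Rs Rp : V -> Prop) (Phi : V -> Prop) : Prop :=
  (forall x, Phi x -> Rp x) /\ closed_in Rs Phi /\ closed_in Rs (compl_in Rp Phi).

Definition gadj {V : zmodType} (Rp : V -> Prop) (Phi : V -> Prop) (x y : V) : Prop :=
  Phi x /\ Phi y /\ (compl_in Rp Phi (x - y) \/ compl_in Rp Phi (y - x)).

Definition gconn {V : zmodType} (Rp : V -> Prop) (Phi : V -> Prop) : V -> V -> Prop :=
  clos_refl_trans V (gadj Rp Phi).

Definition is_component {V : zmodType} (Rp : V -> Prop) (Phi : V -> Prop)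
    (A : V -> Prop) : Prop :=
  exists a, Phi a /\ forall x, A x <-> gconn Rp Phi a x.

Definition same_set {V : Type} (A B : V -> Prop) : Prop := forall x, A x <-> B x.

Definition sumset {V : zmodType} (Rs : V -> Prop) (A B : V -> Prop) (z : V) : Prop :=
  Rs z /\ exists a c, A a /\ B c /\ z = a + c.

Definition comp_add {V : zmodType} (Rs Rp : V -> Prop) (Phi : V -> Prop)
    (A B C : V -> Prop) : Prop :=
  is_component Rp Phi C /\
  (exists z, sumset Rs A B z) /\
  ( (forall z, sumset Rs A B z -> C z)
  \/ ( (exists z z', sumset Rs A B z /\ sumset Rs A B z' /\ ~ gconn Rp Phi z z')
       /\ same_set A B /\ ~ same_set C A /\ (exists z, sumset Rs A B z /\ C z))).

(* Main.v *)
Require Import Defs.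
From HB Require Import structures.
From mathcomp Require Import all_boot all_order all_algebra.
From mathcomp Require Import reals.
From Stdlib Require Import ClassicalEpsilon Relations.
From mathcomp Require Import ring lra zify.
Set Implicit Arguments. Unset Strict Implicit. Unset Printing Implicit Defensive.
Import Order.TTheory GRing.Theory Num.Theory.
Local Open Scope ring_scope.

Lemma dotvE (R : realType) n (u v : 'rV[R]_n) : dotv u v = \sum_k u 0 k * v 0 k.
Proof. by rewrite /dotv !mxE; apply: eq_bigr => k _; rewrite mxE. Qed.

Lemma dotvC (R : realType) n (u v : 'rV[R]_n) : dotv u v = dotv v u.
Proof. by rewrite !dotvE; apply: eq_bigr => k _; rewrite mulrC. Qed.

Lemma dotvDl (R : realType) n (u w v : 'rV[R]_n) : dotv (u + w) v = dotv u v + dotv w v.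
Proof. by rewrite !dotvE -big_split; apply: eq_bigr => k _; rewrite mxE mulrDl. Qed.

Lemma dotvZl (R : realType) n (a : R) (u v : 'rV[R]_n) : dotv (a *: u) v = a * dotv u v.
Proof. by rewrite !dotvE mulr_sumr; apply: eq_bigr => k _; rewrite mxE mulrA. Qed.

Lemma dotv0l (R : realType) n (v : 'rV[R]_n) : dotv 0 v = 0.
Proof. by rewrite dotvE big1 // => k _; rewrite mxE mul0r. Qed.

Lemma dotvNl (R : realType) n (u v : 'rV[R]_n) : dotv (- u) v = - dotv u v.
Proof. by rewrite -scaleN1r dotvZl mulN1r. Qed.

Lemma dotvBl (R : realType) n (u w v : 'rV[R]_n) : dotv (u - w) v = dotv u v - dotv w v.
Proof. by rewrite dotvDl dotvNl. Qed.

Lemma dotvDr (R : realType) n (u w v : 'rV[R]_n) : dotv v (u + w) = dotv v u + dotv v w.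
Proof. by rewrite !(dotvC v) dotvDl. Qed.
Lemma dotvZr (R : realType) n (a : R) (u v : 'rV[R]_n) : dotv v (a *: u) = a * dotv v u.
Proof. by rewrite !(dotvC v) dotvZl. Qed.
Lemma dotv0r (R : realType) n (v : 'rV[R]_n) : dotv v 0 = 0.
Proof. by rewrite dotvC dotv0l. Qed.
Lemma dotvNr (R : realType) n (u v : 'rV[R]_n) : dotv v (- u) = - dotv v u.
Proof. by rewrite !(dotvC v) dotvNl. Qed.
Lemma dotvBr (R : realType) n (u w v : 'rV[R]_n) : dotv v (u - w) = dotv v u - dotv v w.
Proof. by rewrite !(dotvC v) dotvBl. Qed.

Lemma dotv_suml (R : realType) n (I : Type) (r : seq I) (P : pred I) (F : I -> 'rV[R]_n) v :
  dotv (\sum_(i <- r | P i) F i) v = \sum_(i <- r | P i) dotv (F i) v.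
Proof. exact: (big_morph (fun x => dotv x v) (fun x y => dotvDl x y v) (dotv0l v)). Qed.
Lemma dotv_sumr (R : realType) n (I : Type) (r : seq I) (P : pred I) (F : I -> 'rV[R]_n) v :
  dotv v (\sum_(i <- r | P i) F i) = \sum_(i <- r | P i) dotv v (F i).
Proof. rewrite dotvC dotv_suml; apply: eq_bigr => i _; exact: dotvC. Qed.

Lemma dotv_ge0 (R : realType) n (u : 'rV[R]_n) : 0 <= dotv u u.
Proof. by rewrite dotvE sumr_ge0 // => k _; rewrite -expr2 sqr_ge0. Qed.

Lemma dotv_eq0 (R : realType) n (u : 'rV[R]_n) : dotv u u = 0 -> u = 0.
Proof.
rewrite dotvE => /psumr_eq0P H; apply/rowP => k; rewrite mxE.
have /eqP := H (fun i _ => sqr_ge0 (u 0 i)) k isT. by rewrite mulf_eq0 orbb => /eqP.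
Qed.

Definition Bm (R : realType) n m (b : 'I_m -> 'rV[R]_n) (J : {set 'I_m}) : 'M[R]_(m,n) :=
  \matrix_(i, k) (if i \in J then b i 0 k else 0).

Lemma row_Bm (R : realType) n m (b : 'I_m -> 'rV[R]_n) (J : {set 'I_m}) i :
  row i (Bm b J) = if i \in J then b i else 0.
Proof. by apply/rowP => k; rewrite !mxE; case: (i \in J); rewrite ?mxE. Qed.

Lemma mul_Bm (R : realType) n m (b : 'I_m -> 'rV[R]_n) (J : {set 'I_m}) (x : 'rV[R]_m) :
  x *m Bm b J = \sum_(j in J) x 0 j *: b j.
Proof.
rewrite mulmx_sum_row (bigID (mem J)) /= [X in _ + X]big1 ?addr0.
  by apply: eq_bigr => i iJ; rewrite row_Bm iJ.
by move=> i /negbTE iJ; rewrite row_Bm iJ scaler0.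
Qed.

Lemma mul_BmT (R : realType) n m (b : 'I_m -> 'rV[R]_n) (J : {set 'I_m}) (w : 'rV[R]_n) i :
  (w *m (Bm b J)^T) 0 i = if i \in J then dotv w (b i) else 0.
Proof.
rewrite mxE; case: ifP => iJ.
  by rewrite dotvE; apply: eq_bigr => k _; rewrite !mxE iJ.
by rewrite big1 // => k _; rewrite !mxE iJ mulr0.
Qed.

Lemma oproj_exists (R : realType) n m (b : 'I_m -> 'rV[R]_n) (J : {set 'I_m}) v :
  exists w, is_oproj b J v w.
Proof.
set B := Bm b J; set W := kermx B^T.
have capW : (B :&: W)%MS == 0.
  apply/rowV0P => u; rewrite sub_capmx => /andP[/submxP[D ->] /sub_kermxP uW].
  apply: dotv_eq0; rewrite /dotv trmx_mul mulmxA.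
  by rewrite uW mul0mx mxE.
have full : row_full (B + W)%MS.
  rewrite /row_full; apply/eqP.
  have := mxrank_sum_cap B W; move: capW; rewrite -mxrank_eq0 => /eqP ->.
  rewrite mxrank_ker mxrank_tr addn0 => ->.
  by rewrite subnKC // rank_leq_col.
have /sub_addsmxP[[x y] /= Hv] : (v <= B + W)%MS by apply: submx_full.
exists (y *m W); split.
  move=> j jJ; have := mul_BmT b J (y *m W) j; rewrite jJ => <-.
  by rewrite -mulmxA mulmx_ker mulmx0 mxE.
by exists (fun j => x 0 j); rewrite Hv addrK mul_Bm.
Qed.

Definition inspan (R : realType) n m (b : 'I_m -> 'rV[R]_n) (J : {set 'I_m}) x :=
  exists c : 'I_m -> R, x = \sum_(j in J) c j *: b j.

Lemma span_orth0 (R : realType) n m (b : 'I_m -> 'rV[R]_n) (J : {set 'I_m}) x :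
  inspan b J x -> (forall j, j \in J -> dotv x (b j) = 0) -> x = 0.
Proof.
move=> [c Hc] Ho; apply: dotv_eq0.
rewrite {2}Hc dotv_sumr big1 // => j jJ; by rewrite dotvZr Ho // mulr0.
Qed.

Lemma inspanD (R : realType) n m (b : 'I_m -> 'rV[R]_n) (J : {set 'I_m}) x y :
  inspan b J x -> inspan b J y -> inspan b J (x + y).
Proof.
move=> [c ->] [d ->]; exists (fun j => c j + d j).
by rewrite -big_split; apply: eq_bigr => j _; rewrite scalerDl.
Qed.

Lemma inspanZ (R : realType) n m (b : 'I_m -> 'rV[R]_n) (J : {set 'I_m}) (a : R) x :
  inspan b J x -> inspan b J (a *: x).
Proof.
move=> [c ->]; exists (fun j => a * c j).
by rewrite scaler_sumr; apply: eq_bigr => j _; rewrite scalerA.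
Qed.

Lemma inspanN (R : realType) n m (b : 'I_m -> 'rV[R]_n) (J : {set 'I_m}) x :
  inspan b J x -> inspan b J (- x).
Proof. by move=> H; rewrite -scaleN1r; apply: inspanZ. Qed.

Lemma inspanB (R : realType) n m (b : 'I_m -> 'rV[R]_n) (J : {set 'I_m}) x y :
  inspan b J x -> inspan b J y -> inspan b J (x - y).
Proof. by move=> Hx Hy; apply: inspanD => //; apply: inspanN. Qed.

Lemma inspan0 (R : realType) n m (b : 'I_m -> 'rV[R]_n) (J : {set 'I_m}) : inspan b J 0.
Proof. by exists (fun=> 0); rewrite big1 // => j _; rewrite scale0r. Qed.

Lemma inspan_b (R : realType) n m (b : 'I_m -> 'rV[R]_n) (J : {set 'I_m}) j :
  j \in J -> inspan b J (b j).
Proof.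
move=> jJ; exists (fun i => if i == j then 1 else 0).
rewrite (bigD1 j) //= eqxx scale1r big1 ?addr0 // => i /andP[_ /negbTE ->].
by rewrite scale0r.
Qed.

Lemma oprojP (R : realType) n m (b : 'I_m -> 'rV[R]_n) (J : {set 'I_m}) v :
  is_oproj b J v (oproj b J v).
Proof. by apply: epsilon_spec; apply: oproj_exists. Qed.

Lemma oproj_orth (R : realType) n m (b : 'I_m -> 'rV[R]_n) (J : {set 'I_m}) v j :
  j \in J -> dotv (oproj b J v) (b j) = 0.
Proof. by case: (oprojP b J v) => H _; apply: H. Qed.

Lemma oproj_diff (R : realType) n m (b : 'I_m -> 'rV[R]_n) (J : {set 'I_m}) v :
  inspan b J (v - oproj b J v).
Proof. by case: (oprojP b J v). Qed.

Lemma oproj_uniq (R : realType) n m (b : 'I_m -> 'rV[R]_n) (J : {set 'I_m}) v w :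
  is_oproj b J v w -> oproj b J v = w.
Proof.
move=> [Hw Hs]; apply/eqP; rewrite -subr_eq0; apply/eqP.
apply: (span_orth0 (b := b) (J := J)).
  have -> : oproj b J v - w = (v - w) - (v - oproj b J v).
    by rewrite opprB [RHS]addrC addrA subrK.
  by apply: inspanB => //; apply: oproj_diff.
by move=> j jJ; rewrite dotvBl oproj_orth // Hw // subrr.
Qed.

Lemma oprojD (R : realType) n m (b : 'I_m -> 'rV[R]_n) (J : {set 'I_m}) u v :
  oproj b J (u + v) = oproj b J u + oproj b J v.
Proof.
apply: oproj_uniq; split.
  by move=> j jJ; rewrite dotvDl !oproj_orth // addr0.
have := inspanD (oproj_diff b J u) (oproj_diff b J v) => [[c Hc]]; exists c.
by rewrite -Hc opprD addrACA.
Qed.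

Lemma oprojZ (R : realType) n m (b : 'I_m -> 'rV[R]_n) (J : {set 'I_m}) (a : R) v :
  oproj b J (a *: v) = a *: oproj b J v.
Proof.
apply: oproj_uniq; split.
  by move=> j jJ; rewrite dotvZl !oproj_orth // mulr0.
have := inspanZ a (oproj_diff b J v) => [[c Hc]]; exists c.
by rewrite -Hc scalerBr.
Qed.

Lemma oprojN (R : realType) n m (b : 'I_m -> 'rV[R]_n) (J : {set 'I_m}) v :
  oproj b J (- v) = - oproj b J v.
Proof. by rewrite -scaleN1r oprojZ scaleN1r. Qed.

Lemma oprojB (R : realType) n m (b : 'I_m -> 'rV[R]_n) (J : {set 'I_m}) u v :
  oproj b J (u - v) = oproj b J u - oproj b J v.
Proof. by rewrite oprojD oprojN. Qed.

Lemma oproj_span (R : realType) n m (b : 'I_m -> 'rV[R]_n) (J : {set 'I_m}) v :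
  inspan b J v -> oproj b J v = 0.
Proof.
move=> Hv; apply: oproj_uniq; split; first by move=> j _; rewrite dotv0l.
by rewrite subr0.
Qed.

Lemma oproj0 (R : realType) n m (b : 'I_m -> 'rV[R]_n) (J : {set 'I_m}) : oproj b J 0 = 0.
Proof. exact/oproj_span/inspan0. Qed.

Lemma oproj_sum (R : realType) n m (b : 'I_m -> 'rV[R]_n) (J : {set 'I_m}) (I : Type) (r : seq I)
  (P : pred I) (F : I -> 'rV[R]_n) :
  oproj b J (\sum_(i <- r | P i) F i) = \sum_(i <- r | P i) oproj b J (F i).
Proof. exact: (big_morph _ (oprojD b J) (oproj0 b J)). Qed.

Lemma int_pos_cases (R : realFieldType) (k : int) :
  0 < (k%:~R : R) -> (k%:~R : R) = 1 \/ 2 <= (k%:~R : R).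
Proof.
rewrite ltr0z => k0.
have [->|k1] := eqVneq k 1; first by left.
right. have : (2 <= k)%R by lia.
by rewrite -(ler_int R).
Qed.

Lemma rs_nz (R : realType) n (D : seq 'rV[R]_n) x :
  is_root_system D -> x \in D -> 0 < dotv x x.
Proof.
move=> [H0 _] xD; rewrite lt_def dotv_ge0 andbT.
apply/eqP => /dotv_eq0 x0; by move: H0; rewrite -x0 xD.
Qed.

Lemma rs_neg (R : realType) n (D : seq 'rV[R]_n) x :
  is_root_system D -> x \in D -> - x \in D.
Proof.
move=> HD xD; have := rs_nz HD xD => nx.
case: HD => [_ [_ [Hr _]]]; have := Hr x x xD xD.
have -> : 2 * dotv x x / dotv x x = 2 by field; rewrite gt_eqF.
by rewrite scaler_nat mulr2n opprD addrA subrr add0r.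
Qed.

Lemma rs_diff (R : realType) n (D : seq 'rV[R]_n) x y :
  is_root_system D -> x \in D -> y \in D -> 0 < dotv x y -> x - y \in D \/ x = y.
Proof.
move=> HD xD yD p0.
have nx := rs_nz HD xD; have ny := rs_nz HD yD.
case: (HD) => [_ [Hint [Hr Hp]]].
have [k1 Hk1] := Hint x y xD yD; have [k2 Hk2] := Hint y x yD xD.
have k1p : 0 < (k1%:~R : R) by rewrite -Hk1 divr_gt0 // mulr_gt0.
have k2p : 0 < (k2%:~R : R) by rewrite -Hk2 dotvC divr_gt0 // mulr_gt0.
case: (int_pos_cases k1p) => [e1|g1].
  left; have := Hr x y xD yD; rewrite Hk1 e1 scale1r => /(rs_neg HD).
  by rewrite opprB.
case: (int_pos_cases k2p) => [e2|g2].
  by left; have := Hr y x yD xD; rewrite Hk2 e2 scale1r.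
right.
have le1 : dotv x x <= dotv x y.
  move: g1; rewrite -Hk1 ler_pdivlMr // => H; lra.
have le2 : dotv y y <= dotv x y.
  move: g2; rewrite -Hk2 ler_pdivlMr // dotvC => H; lra.
set t := dotv x y / dotv x x.
have e : dotv (y - t *: x) (y - t *: x) = dotv y y - dotv x y * dotv x y / dotv x x.
  rewrite !(dotvBl, dotvBr, dotvZl, dotvZr) (dotvC y x) /t.
  by field; rewrite gt_eqF.
have h0 : dotv (y - t *: x) (y - t *: x) = 0.
  apply/eqP; rewrite eq_le dotv_ge0 andbT e subr_le0 ler_pdivlMr //.
  nra.
have yt : y = t *: x by apply/eqP; rewrite -subr_eq0; apply/eqP/dotv_eq0.
have tp : 0 < t by rewrite /t divr_gt0.
have := Hp x t xD; rewrite -yt => /(_ yD) [t1|t1].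
  by rewrite yt t1 scale1r.
by move: tp; rewrite t1 ltr0N1.
Qed.

Lemma inspan_sum (R : realType) n m (b : 'I_m -> 'rV[R]_n) (J : {set 'I_m})
  (I : Type) (r : seq I) (P : pred I) (F : I -> 'rV[R]_n) :
  (forall i, P i -> inspan b J (F i)) -> inspan b J (\sum_(i <- r | P i) F i).
Proof.
move=> H; elim/big_rec: _ => [|i x Pi Hx]; first exact: inspan0.
by apply: inspanD => //; apply: H.
Qed.

Lemma dotv_span_orth (R : realType) n m (b : 'I_m -> 'rV[R]_n) (J : {set 'I_m}) x y :
  inspan b J x -> (forall j, j \in J -> dotv y (b j) = 0) -> dotv x y = 0.
Proof.
move=> [c ->] Hy; rewrite dotv_suml big1 // => j jJ.
by rewrite dotvZl dotvC Hy // mulr0.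
Qed.

Lemma dotv_oproj_l (R : realType) n m (b : 'I_m -> 'rV[R]_n) (J : {set 'I_m}) a y :
  (forall j, j \in J -> dotv y (b j) = 0) -> dotv a y = dotv (oproj b J a) y.
Proof.
move=> Hy; have := dotv_span_orth (oproj_diff b J a) Hy.
by rewrite dotvBl => /eqP; rewrite subr_eq0 => /eqP.
Qed.

Definition refl_at (R : realType) n (c v : 'rV[R]_n) : 'rV[R]_n :=
  v - (2 * dotv v c / dotv c c) *: c.

Lemma dotv_refl (R : realType) n (c v : 'rV[R]_n) :
  0 < dotv c c -> dotv (refl_at c v) c = - dotv v c.
Proof.
move=> nc; rewrite /refl_at dotvBl dotvZl.
by field; rewrite gt_eqF.
Qed.

Lemma refl_atK (R : realType) n (c : 'rV[R]_n) :
  0 < dotv c c -> cancel (refl_at c) (refl_at c).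
Proof.
move=> nc v; rewrite {1}/refl_at dotv_refl // /refl_at -!scaleNr -addrA -scalerDl.
have -> : - (2 * dotv v c / dotv c c) + - (2 * - dotv v c / dotv c c) = 0.
  by field; rewrite gt_eqF.
by rewrite scale0r addr0.
Qed.

Lemma refl_in_D (R : realType) n (D : seq 'rV[R]_n) c v :
  is_root_system D -> c \in D -> v \in D -> refl_at c v \in D.
Proof.
move=> [_ [_ [Hr _]]] cD vD; rewrite /refl_at dotvC; exact: Hr.
Qed.
Lemma qroot_diff (R : realType) n m (D : seq 'rV[R]_n) (b : 'I_m -> 'rV[R]_n)
    (J : {set 'I_m}) x y :
  is_root_system D -> is_base D b -> qroot D b J x -> qroot D b J y ->
  0 < dotv x y -> qroot D b J (x - y) \/ x = y.
Proof.
move=> HD [HbD _] [_ [a [aD ->]]] [y0 [d0 [d0D Ey]]] pxy.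
set beta := y in Ey pxy *.
pose L := [seq d <- undup D | oproj b J d == beta].
have Luniq : uniq L by rewrite filter_uniq // undup_uniq.
have memL d : (d \in L) = (d \in D) && (oproj b J d == beta).
  by rewrite mem_filter mem_undup andbC.
have borth : forall j, j \in J -> dotv beta (b j) = 0.
  by move=> j jJ; rewrite Ey oproj_orth.
pose c := \sum_(d <- L) d.
have corth : forall j, j \in J -> dotv c (b j) = 0.
  move=> j jJ; have nb := rs_nz HD (HbD j).
  pose s := refl_at (b j).
  have sL : perm_eq (map s L) L.
    apply: uniq_perm => //; first by rewrite (map_inj_uniq (can_inj (refl_atK nb))).
    move=> z; apply/mapP/idP => [[d dL ->]|zL].
      move: dL; rewrite !memL => /andP[dD /eqP od]; apply/andP; split.
        by apply: refl_in_D.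
      rewrite /s /refl_at oprojB oprojZ (oproj_span (inspan_b b jJ)) scaler0 subr0.
      by rewrite od.
    exists (s z); last by rewrite /s refl_atK.
    move: zL; rewrite !memL => /andP[zD /eqP oz]; apply/andP; split.
      by apply: refl_in_D.
    rewrite /s /refl_at oprojB oprojZ (oproj_span (inspan_b b jJ)) scaler0 subr0.
    by rewrite oz.
  have e1 : dotv (\sum_(d <- map s L) d) (b j) = dotv c (b j) by rewrite (perm_big _ sL).
  move: e1; rewrite big_map !dotv_suml.
  under eq_bigr do rewrite dotv_refl //.
  rewrite sumrN => /eqP; rewrite eq_sym -subr_eq0 opprK -mulr2n mulrn_eq0 /= => /eqP.
  done.
pose c' := \sum_(d <- L) oproj b J d.
have cc' : c = c'.
  apply/eqP; rewrite -subr_eq0; apply/eqP; apply: (span_orth0 (b := b) (J := J)).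
    rewrite /c /c' -sumrB; apply: inspan_sum => d _.
    exact: oproj_diff.
  move=> j jJ; rewrite dotvBl corth // /c' dotv_suml big1_seq ?subrr //.
  by move=> d /andP[_]; rewrite memL => /andP[_ /eqP ->]; apply: borth.
have pos : 0 < dotv a c.
  rewrite cc' /c' dotv_sumr.
  have d0L : d0 \in L by rewrite memL d0D Ey eqxx.
  rewrite (bigD1_seq d0) //=.
  have tpos : forall d, d \in L -> dotv a (oproj b J d) = dotv (oproj b J a) beta.
    by move=> d; rewrite memL => /andP[_ /eqP ->]; apply: dotv_oproj_l.
  have h2 : 0 <= \sum_(i <- L | i != d0) dotv a (oproj b J i).
    rewrite big_seq_cond sumr_ge0 // => d /andP[dL _].
    by rewrite tpos // ltW.
  rewrite tpos //; move: pxy h2; set u := dotv _ _; set w := \sum_(_ <- _ | _) _.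
  move=> *; lra.
have [d [dL pd]] : exists d, d \in L /\ 0 < dotv a d.
  case: (classic (exists d, d \in L /\ 0 < dotv a d)) => // H.
  exfalso; move: pos; apply/negP; rewrite -leNgt.
  rewrite /c dotv_sumr big_seq sumr_le0 // => d dL.
  by rewrite leNgt; apply/negP => pd; apply: H; exists d.
move: dL; rewrite memL => /andP[dD /eqP od].
have [ad|ad] := rs_diff HD aD dD pd; last by right; rewrite ad od.
have [e|ne] := eqVneq (oproj b J a - beta) 0.
  by right; apply/eqP; rewrite -subr_eq0 e.
by left; split => //; exists (a - d); split => //; rewrite oprojB od.
Qed.
Lemma sbase_indep (R : realType) n m (D : seq 'rV[R]_n) (b : 'I_m -> 'rV[R]_n)
    (J : {set 'I_m}) :
  is_base D b -> forall d : 'I_m -> R,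
  \sum_(i | i \notin J) d i *: sbase b J i = 0 -> forall i, i \notin J -> d i = 0.
Proof.
move=> [_ [Hind _]] d H.
set v := \sum_(i | i \notin J) d i *: b i.
have ov : oproj b J v = 0.
  rewrite /v oproj_sum -[RHS]H; apply: eq_bigr => i _; by rewrite oprojZ.
have [e He] : inspan b J v by have := oproj_diff b J v; rewrite ov subr0.
pose f i := if i \in J then - e i else d i.
have : \sum_i f i *: b i = 0.
  rewrite (bigID (mem J)) /=.
  have -> : \sum_(i | i \in J) f i *: b i = - v.
    rewrite He -sumrN; apply: eq_bigr => i iJ; by rewrite /f iJ scaleNr.
  have -> : \sum_(i | i \notin J) f i *: b i = v.
    apply: eq_bigr => i iJ; by rewrite /f (negbTE iJ).
  by rewrite addNr.
move/Hind => Hf i iJ; have := Hf i; by rewrite /f (negbTE iJ).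
Qed.

Lemma coef_uniq (R : realType) n m (D : seq 'rV[R]_n) (b : 'I_m -> 'rV[R]_n)
    (J : {set 'I_m}) w c c' i :
  is_base D b -> is_coeffs b J w c -> is_coeffs b J w c' -> i \notin J -> c i = c' i.
Proof.
move=> HB Hc Hc' iJ.
have Hs : \sum_(i | i \notin J) ((c i)%:~R - (c' i)%:~R) *: sbase b J i = 0 :> 'rV[R]_n.
  under eq_bigr do rewrite scalerBl.
  by rewrite sumrB -Hc -Hc' subrr.
have := @sbase_indep R n m D b J HB (fun i => (c i)%:~R - (c' i)%:~R) Hs i iJ.
by move/eqP; rewrite subr_eq0 => /eqP /intr_inj.
Qed.

Lemma qroot_coeffs (R : realType) n m (D : seq 'rV[R]_n) (b : 'I_m -> 'rV[R]_n)
    (J : {set 'I_m}) w :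
  is_base D b -> qroot D b J w ->
  exists c, is_coeffs b J w c /\ ((forall i, (0 <= c i)%R) \/ (forall i, (c i <= 0)%R)).
Proof.
move=> [_ [_ Hb]] [_ [a [aD ->]]].
have [c [Ea Hs]] := Hb a aD; exists c; split => //.
rewrite /is_coeffs Ea oproj_sum (bigID (mem J)) /= big1 ?add0r.
  by apply: eq_bigr => i _; rewrite oprojZ.
move=> i iJ; by rewrite oprojZ (oproj_span (inspan_b b iJ)) scaler0.
Qed.

Lemma qroot_neg (R : realType) n m (D : seq 'rV[R]_n) (b : 'I_m -> 'rV[R]_n)
    (J : {set 'I_m}) w :
  is_root_system D -> qroot D b J w -> qroot D b J (- w).
Proof.
move=> HD [w0 [a [aD E]]]; subst w; split; first by rewrite oppr_eq0.
by exists (- a); split; [apply: rs_neg | rewrite oprojN].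
Qed.

Definition Pos (R : realType) n m (b : 'I_m -> 'rV[R]_n) (J : {set 'I_m}) x :=
  exists c, is_coeffs b J x c /\ forall i, i \notin J -> (0 <= c i)%R.

Lemma coeffsD (R : realType) n m (b : 'I_m -> 'rV[R]_n) (J : {set 'I_m}) x y c d :
  is_coeffs b J x c -> is_coeffs b J y d -> is_coeffs b J (x + y) (fun i => c i + d i).
Proof.
move=> -> ->; rewrite /is_coeffs -big_split; apply: eq_bigr => i _.
by rewrite intrD scalerDl.
Qed.

Lemma PosD (R : realType) n m (b : 'I_m -> 'rV[R]_n) (J : {set 'I_m}) x y :
  Pos b J x -> Pos b J y -> Pos b J (x + y).
Proof.
move=> [c [Hc c0]] [d [Hd d0]]; exists (fun i => c i + d i); split.
  exact: coeffsD.
by move=> i iJ; rewrite addr_ge0 ?c0 ?d0.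
Qed.

Lemma Pos_zero (R : realType) n m (D : seq 'rV[R]_n) (b : 'I_m -> 'rV[R]_n)
    (J : {set 'I_m}) x y :
  is_base D b -> Pos b J x -> Pos b J y -> x + y = 0 -> x = 0.
Proof.
move=> HB [c [Hc c0]] [d [Hd d0]] e.
have H0 : is_coeffs b J (x + y) (fun=> 0).
  by rewrite e /is_coeffs big1 // => i _; rewrite scale0r.
have Hcd := coeffsD Hc Hd.
rewrite Hc big1 // => i iJ.
have := coef_uniq HB Hcd H0 iJ => /= e2.
have : c i = 0 by have := c0 i iJ; have := d0 i iJ; lia.
by move=> ->; rewrite scale0r.
Qed.

Lemma qpos_Pos (R : realType) n m (D : seq 'rV[R]_n) (b : 'I_m -> 'rV[R]_n)
    (J : {set 'I_m}) x : qpos D b J x -> Pos b J x.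
Proof. by case. Qed.

Lemma qroot_split (R : realType) n m (D : seq 'rV[R]_n) (b : 'I_m -> 'rV[R]_n)
    (J : {set 'I_m}) w :
  is_root_system D -> is_base D b -> qroot D b J w -> qpos D b J w \/ qpos D b J (- w).
Proof.
move=> HD HB Hw; have [c [Hc [H|H]]] := qroot_coeffs HB Hw.
  by left; split => //; exists c.
right; split; first exact: qroot_neg.
exists (fun i => - c i); split.
  rewrite /is_coeffs Hc -sumrN; apply: eq_bigr => i _.
  by rewrite intrN scaleNr.
by move=> i _; rewrite oppr_ge0.
Qed.

Lemma qpos_sum_nz (R : realType) n m (D : seq 'rV[R]_n) (b : 'I_m -> 'rV[R]_n)
    (J : {set 'I_m}) x y :
  is_base D b -> qpos D b J x -> qpos D b J y -> x + y <> 0.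
Proof.
move=> HB [[x0 _] Px] [_ Py] e.
by move: x0; rewrite (Pos_zero HB Px Py e) eqxx.
Qed.

Lemma qpos_sum_notneg (R : realType) n m (D : seq 'rV[R]_n) (b : 'I_m -> 'rV[R]_n)
    (J : {set 'I_m}) x y :
  is_base D b -> qpos D b J x -> qpos D b J y -> ~ qpos D b J (- (x + y)).
Proof.
move=> HB Hx Hy [[z0 _] Pz].
have := Pos_zero HB (PosD (qpos_Pos Hx) (qpos_Pos Hy)) Pz (subrr _).
by move/eqP; move: z0; rewrite oppr_eq0 => /negbTE ->.
Qed.

Lemma qpos_add (R : realType) n m (D : seq 'rV[R]_n) (b : 'I_m -> 'rV[R]_n)
    (J : {set 'I_m}) x y :
  is_root_system D -> is_base D b -> qpos D b J x -> qpos D b J y ->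
  qroot D b J (x + y) -> qpos D b J (x + y).
Proof.
move=> HD HB Hx Hy Hs; case: (qroot_split HD HB Hs) => // H.
by case: (qpos_sum_notneg HB Hx Hy H).
Qed.

Lemma supp_add_split (R : realType) n m (D : seq 'rV[R]_n) (b : 'I_m -> 'rV[R]_n)
    (J : {set 'I_m}) x y i :
  is_base D b -> Pos b J x -> Pos b J y -> supp_root b J (x + y) i ->
  supp_root b J x i \/ supp_root b J y i.
Proof.
move=> HB [c [Hc _]] [d [Hd _]] [iJ [e [He ei]]].
have := coef_uniq HB He (coeffsD Hc Hd) iJ => /= E.
have [c0|c0] := eqVneq (c i) 0.
  by right; split => //; exists d; split => //; move: ei; rewrite E c0 add0r.
by left; split => //; exists c.
Qed.

Lemma supp_add_r (R : realType) n m (D : seq 'rV[R]_n) (b : 'I_m -> 'rV[R]_n)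
    (J : {set 'I_m}) x y i :
  is_base D b -> Pos b J x -> Pos b J y -> supp_root b J y i ->
  supp_root b J (x + y) i.
Proof.
move=> HB [c [Hc c0]] [d [Hd d0]] [iJ [e [He ei]]].
have E := coef_uniq HB He Hd iJ.
split => //; exists (fun i => c i + d i); split; first exact: coeffsD.
have := c0 i iJ; have := d0 i iJ; move: ei; rewrite E => /=.
move=> ne a1 a2; apply/eqP => H; move: ne; rewrite (_ : d i = 0) ?eqxx //; lia.
Qed.

Lemma qroot_dot_pos (R : realType) n m (D : seq 'rV[R]_n) (b : 'I_m -> 'rV[R]_n)
    (J : {set 'I_m}) x : qroot D b J x -> 0 < dotv x x.
Proof.
move=> [x0 _]; rewrite lt_def dotv_ge0 andbT; apply/eqP => /dotv_eq0 e.
by move: x0; rewrite e eqxx.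
Qed.

Lemma qroot_sum (R : realType) n m (D : seq 'rV[R]_n) (b : 'I_m -> 'rV[R]_n)
    (J : {set 'I_m}) x y :
  is_root_system D -> is_base D b -> qroot D b J x -> qroot D b J y ->
  dotv x y < 0 -> qroot D b J (x + y) \/ x + y = 0.
Proof.
move=> HD HB Hx Hy neg.
have := qroot_diff HD HB Hx (qroot_neg HD Hy); rewrite dotvNr oppr_gt0 opprK.
by move=> /(_ neg) [H|->]; [left|right; rewrite addNr].
Qed.

Lemma propP (R : realType) n m (D : seq 'rV[R]_n) (b : 'I_m -> 'rV[R]_n)
    (J : {set 'I_m}) x y w :
  is_root_system D -> is_base D b -> let Rs := qroot D b J in
  Rs x -> Rs y -> Rs (x + y) -> Rs w -> Rs (x + y + w) ->
  (Rs (x + w) \/ x + w = 0) \/ (Rs (y + w) \/ y + w = 0).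
Proof.
move=> HD HB Rs Hx Hy Hxy Hw Ht.
have [pty|nty] := ltP 0 (dotv (x + y + w) y).
  left; have := qroot_diff HD HB Ht Hy pty.
  rewrite (addrAC x y w) addrK => -[H|e]; first by left.
  by right; move: e => /eqP; rewrite -subr_eq0 addrK => /eqP.
have [ptx|ntx] := ltP 0 (dotv (x + y + w) x).
  right; have := qroot_diff HD HB Ht Hx ptx.
  rewrite -(addrA x y w) (addrC x) addrK => -[H|e]; first by left.
  by right; move: e => /eqP; rewrite -subr_eq0 addrK => /eqP.
have [nxw|pxw] := ltP (dotv x w) 0.
  by left; apply: qroot_sum.
have [nyw|pyw] := ltP (dotv y w) 0.
  by right; apply: qroot_sum.
exfalso; have := qroot_dot_pos Hxy.
move: nty ntx pxw pyw; rewrite !(dotvDl, dotvDr).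
have e1 := dotvC x y; have e2 := dotvC x w; have e3 := dotvC y w.
move=> *; lra.
Qed.

Lemma propQ (R : realType) n m (D : seq 'rV[R]_n) (b : 'I_m -> 'rV[R]_n)
    (J : {set 'I_m}) x y w :
  is_root_system D -> is_base D b -> let Rs := qroot D b J in
  Rs x -> Rs y -> Rs w -> Rs (x + y) -> Rs (x + w) ->
  (Rs (x + y + w) \/ x + y + w = 0) \/ (Rs (y - w) \/ y = w).
Proof.
move=> HD HB Rs Hx Hy Hw Hu Hv.
have [puv|nuv] := ltP 0 (dotv (x + y) (x + w)).
  right; have := qroot_diff HD HB Hu Hv puv.
  rewrite opprD addrACA subrr add0r => -[H|/addrI ->]; by [left|right].
have [nuw|puw] := ltP (dotv (x + y) w) 0.
  by left; apply: qroot_sum.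
have [nvy|pvy] := ltP (dotv (x + w) y) 0.
  by left; rewrite (addrAC x y w); apply: qroot_sum.
have [pyw|nyw] := ltP 0 (dotv y w).
  by right; apply: qroot_diff.
exfalso; have := qroot_dot_pos Hx.
move: nuv puw pvy nyw; rewrite !(dotvDl, dotvDr).
have e1 := dotvC x y; have e2 := dotvC x w; have e3 := dotvC y w.
move=> *; lra.
Qed.

Ltac veq := apply/rowP => k; rewrite !mxE; ring.

Lemma gadj_sym (V : zmodType) (Rp Phi : V -> Prop) x y :
  gadj Rp Phi x y -> gadj Rp Phi y x.
Proof. by move=> [? [? [?|?]]]; split => //; split => //; [right|left]. Qed.

Lemma gconn_sym (V : zmodType) (Rp Phi : V -> Prop) x y :
  gconn Rp Phi x y -> gconn Rp Phi y x.
Proof.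
elim => [u v H|u|u v w _ H1 _ H2].
- by apply: rt_step; apply: gadj_sym.
- exact: rt_refl.
- exact: rt_trans H2 H1.
Qed.

Lemma gconn_Phi (V : zmodType) (Rp Phi : V -> Prop) x y :
  Phi x -> gconn Rp Phi x y -> Phi y.
Proof.
move=> Px H; elim: H Px => [u v [_ [H _]]|u|u v w _ H1 _ H2] //.
by move=> Pu; apply: H2; apply: H1.
Qed.

Lemma comp_Phi (V : zmodType) (Rp Phi A : V -> Prop) x :
  is_component Rp Phi A -> A x -> Phi x.
Proof. by move=> [a [Pa HA]] /HA; apply: gconn_Phi. Qed.

Lemma comp_adj (V : zmodType) (Rp Phi A : V -> Prop) x y :
  is_component Rp Phi A -> A x -> gadj Rp Phi x y -> A y.
Proof.
move=> [a [Pa HA]] /HA Hx Hxy; apply/HA.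
by apply: rt_trans Hx _; apply: rt_step.
Qed.

Lemma comp_conn (V : zmodType) (Rp Phi A : V -> Prop) x y :
  is_component Rp Phi A -> A x -> A y -> gconn Rp Phi x y.
Proof.
move=> [a [Pa HA]] /HA Hx /HA Hy.
by apply: rt_trans Hy; apply: gconn_sym.
Qed.

Lemma comp_same (V : zmodType) (Rp Phi A C : V -> Prop) x :
  is_component Rp Phi A -> is_component Rp Phi C -> A x -> C x -> same_set C A.
Proof.
move=> HA HC Ax Cx y; split => Hy.
  have [a [Pa HA']] := HA; apply/HA'.
  apply: rt_trans (proj1 (HA' x) Ax) _.
  by apply: comp_conn HC Cx Hy.
have [c [Pc HC']] := HC; apply/HC'.
apply: rt_trans (proj1 (HC' x) Cx) _.
by apply: comp_conn HA Ax Hy.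
Qed.

Lemma comp_ind (V : zmodType) (Rp Phi A : V -> Prop) (P : V -> Prop) x0 :
  is_component Rp Phi A -> A x0 -> P x0 ->
  (forall y z, A y -> A z -> gadj Rp Phi y z -> P y -> P z) ->
  forall x, A x -> P x.
Proof.
move=> HA Ax0 P0 Hstep x Ax.
have H := comp_conn HA Ax0 Ax; apply clos_rt_rtn1 in H.
suff : A x /\ P x by case.
elim: H => [|y z Hyz _ [Ay Py]]; first by split.
have Az : A z by apply: comp_adj HA Ay Hyz.
by split => //; apply: Hstep Ay Az Hyz Py.
Qed.

Lemma invF3 (R : realType) n m (D : seq 'rV[R]_n) (b : 'I_m -> 'rV[R]_n)
    (J : {set 'I_m}) (Phi : 'rV[R]_n -> Prop) x g :
  inversion_set (qroot D b J) (qpos D b J) Phi -> Phi x ->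
  compl_in (qpos D b J) Phi g -> qpos D b J (g - x) ->
  compl_in (qpos D b J) Phi (g - x).
Proof.
move=> [_ [HPhi _]] Px [Pg nPg] Hgx; split => // Pgx; apply: nPg.
by have := HPhi _ _ Pgx Px; rewrite subrK; apply; case: Pg.
Qed.

Lemma inv_pos (R : realType) n m (D : seq 'rV[R]_n) (b : 'I_m -> 'rV[R]_n)
    (J : {set 'I_m}) (Phi : 'rV[R]_n -> Prop) x :
  inversion_set (qroot D b J) (qpos D b J) Phi -> Phi x -> qpos D b J x.
Proof. by move=> [H _]; apply: H. Qed.

Lemma half (R : realType) n m (D : seq 'rV[R]_n) (b : 'I_m -> 'rV[R]_n)
    (J : {set 'I_m}) (Phi X Y : 'rV[R]_n -> Prop) x y w z :
  is_root_system D -> is_base D b ->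
  inversion_set (qroot D b J) (qpos D b J) Phi ->
  is_component (qpos D b J) Phi X -> is_component (qpos D b J) Phi Y ->
  X x -> Y y -> z = x + y + w -> Phi z ->
  compl_in (qpos D b J) Phi w \/ compl_in (qpos D b J) Phi (- w) ->
  qroot D b J (x + w) \/ x + w = 0 ->
  (exists x' y', X x' /\ Y y' /\ z = x' + y') \/ Y z.
Proof.
move=> HD HB Hinv HX HY Xx Yy ez Pz Hw Hxw.
have Px := comp_Phi HX Xx; have Py := comp_Phi HY Yy.
case: Hxw => [Rxw|e0]; last first.
  by right; have -> : z = y by rewrite ez -(addrAC x w y) e0 add0r.
case: (qroot_split HD HB Rxw) => [Pxw|Nxw].
  case: (classic (Phi (x + w))) => [Phxw|nPhxw].
    left; exists (x + w), y; split; last by split => //; rewrite ez addrAC.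
    apply: comp_adj HX Xx _; split => //; split => //.
    case: Hw => [Hw|Hw]; [right|left].
      by have -> : x + w - x = w by veq.
    by have -> : x - (x + w) = - w by veq.
  right; apply: comp_adj HY Yy _; split => //; split => //; right.
  by have -> : z - y = x + w by rewrite ez; veq.
case: Hw => [Hw|Hw].
  by case: (qpos_sum_notneg HB (inv_pos Hinv Px) (proj1 Hw) Nxw).
right; apply: comp_adj HY Yy _; split => //; split => //; left.
have -> : y - z = - w - x by rewrite ez; veq.
apply: invF3 => //.
by have -> : - w - x = - (x + w) by veq.
Qed.

Lemma compl_root (R : realType) n m (D : seq 'rV[R]_n) (b : 'I_m -> 'rV[R]_n)
    (J : {set 'I_m}) (Phi : 'rV[R]_n -> Prop) w :
  is_root_system D ->
  compl_in (qpos D b J) Phi w \/ compl_in (qpos D b J) Phi (- w) -> qroot D b J w.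
Proof.
move=> HD [[[H _] _]|[[H _] _]] //.
by rewrite -(opprK w); apply: qroot_neg.
Qed.

Lemma ZC (R : realType) n m (D : seq 'rV[R]_n) (b : 'I_m -> 'rV[R]_n)
    (J : {set 'I_m}) (Phi A B C : 'rV[R]_n -> Prop) z0 :
  is_root_system D -> is_base D b ->
  inversion_set (qroot D b J) (qpos D b J) Phi ->
  is_component (qpos D b J) Phi A -> is_component (qpos D b J) Phi B ->
  is_component (qpos D b J) Phi C ->
  sumset (qroot D b J) A B z0 -> C z0 -> ~ same_set C A -> ~ same_set C B ->
  forall c, C c -> sumset (qroot D b J) A B c.
Proof.
move=> HD HB Hinv HA HB' HC Hz0 Cz0 nCA nCB.
apply: (comp_ind HC Cz0 Hz0) => y z Cy Cz Hyz [Ry [a [b' [Aa [Bb ey]]]]].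
have [_ [Pz Hw0]] := Hyz.
set w := z - y.
have Hw : compl_in (qpos D b J) Phi w \/ compl_in (qpos D b J) Phi (- w).
  by case: Hw0 => H; [right; rewrite /w opprB | left].
have ez : z = a + b' + w by rewrite /w -ey; veq.
have Rz : qroot D b J z by case: (inv_pos Hinv Pz).
have Ra : qroot D b J a by case: (inv_pos Hinv (comp_Phi HA Aa)).
have Rb : qroot D b J b' by case: (inv_pos Hinv (comp_Phi HB' Bb)).
split => //.
have Rab : qroot D b J (a + b') by rewrite -ey.
have Rabw : qroot D b J (a + b' + w) by rewrite -ez.
case: (propP HD HB Ra Rb Rab (compl_root HD Hw) Rabw) => H.
  case: (half HD HB Hinv HA HB' Aa Bb ez Pz Hw H) => [[x' [y' [? [? ?]]]]|Bz].
    by exists x', y'.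
  by case: nCB; apply: (comp_same HB' HC Bz Cz).
have ez' : z = b' + a + w by rewrite ez (addrC a).
case: (half HD HB Hinv HB' HA Bb Aa ez' Pz Hw H) => [[x' [y' [? [? e]]]]|Az].
  by exists y', x'; split => //; split => //; rewrite e addrC.
by case: nCA; apply: (comp_same HA HC Az Cz).
Qed.

Lemma partner (R : realType) n m (D : seq 'rV[R]_n) (b : 'I_m -> 'rV[R]_n)
    (J : {set 'I_m}) (Phi A B C : 'rV[R]_n -> Prop) a0 b0 :
  is_root_system D -> is_base D b ->
  inversion_set (qroot D b J) (qpos D b J) Phi ->
  is_component (qpos D b J) Phi A -> is_component (qpos D b J) Phi B ->
  is_component (qpos D b J) Phi C ->
  A a0 -> B b0 -> qroot D b J (a0 + b0) -> C (a0 + b0) ->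
  forall y, B y -> (exists a, A a /\ qroot D b J (a + y) /\ C (a + y)) \/ C y.
Proof.
move=> HD HB Hinv HA HB' HC Aa0 Bb0 R0 C0.
apply: (comp_ind HB' Bb0); first by left; exists a0.
move=> y z By Bz Hyz [[a [Aa [Ray Cay]]]|Cy]; last first.
  by right; apply: comp_adj HC Cy Hyz.
have [Py [Pz Hw0]] := Hyz.
set w := z - y.
have Hw : compl_in (qpos D b J) Phi w \/ compl_in (qpos D b J) Phi (- w).
  by case: Hw0 => H; [right; rewrite /w opprB | left].
have ez : z = y + w by rewrite /w; veq.
have Rz : qroot D b J z by case: (inv_pos Hinv Pz).
have Ry : qroot D b J y by case: (inv_pos Hinv Py).
have Pa := comp_Phi HA Aa.
have Ra : qroot D b J a by case: (inv_pos Hinv Pa).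
have Pay := comp_Phi HC Cay.
have Rya : qroot D b J (y + a) by rewrite addrC.
have Ryw : qroot D b J (y + w) by rewrite -ez.
have [_ [HPhi _]] := Hinv.
case: (propQ HD HB Ry Ra (compl_root HD Hw) Rya Ryw) => [[H|H]|[H|H]].
- left; exists a; have e : a + z = y + a + w by rewrite ez; veq.
  have Raz : qroot D b J (a + z) by rewrite e.
  split => //; split => //.
  apply: comp_adj HC Cay _; split => //; split; first exact: HPhi.
  case: Hw => Hw; [right|left].
    by have -> : a + z - (a + y) = w by rewrite ez; veq.
  by have -> : a + y - (a + z) = - w by rewrite ez; veq.
- exfalso; apply: (qpos_sum_nz HB (inv_pos Hinv Pa) (inv_pos Hinv Pz)).
  by rewrite ez -H; veq.
- case: (qroot_split HD HB H) => [Paw|Naw].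
    case: (classic (Phi (a - w))) => [Phaw|nPhaw].
      left; exists (a - w).
      have e : a - w + z = a + y by rewrite ez; veq.
      rewrite e; split => //.
      apply: comp_adj HA Aa _; split => //; split => //.
      case: Hw => Hw; [left|right].
        by have -> : a - (a - w) = w by veq.
      by have -> : a - w - a = - w by veq.
    right; apply: comp_adj HC Cay _; split => //; split => //; left.
    by have -> : a + y - z = a - w by rewrite ez; veq.
  case: Hw => Hw.
    right; apply: comp_adj HC Cay _; split => //; split => //; right.
    have -> : z - (a + y) = w - a by rewrite ez; veq.
    apply: invF3 => //.
    by have -> : w - a = - (a - w) by veq.
  exfalso; apply: (qpos_sum_notneg HB (inv_pos Hinv Pa) (proj1 Hw)).
  by [].
- exfalso; subst a; case: Hw => Hw; first by case: Hw.
  by apply: (qpos_sum_nz HB (inv_pos Hinv Pa) (proj1 Hw)); rewrite subrr.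
Qed.

Theorem proposition4p19 (R : realType) (n m : nat) (D : seq 'rV[R]_n)
    (b : 'I_m -> 'rV[R]_n) (J : {set 'I_m}) (Phi A B C : 'rV[R]_n -> Prop) :
  is_root_system D -> is_base D b -> J \proper [set: 'I_m] ->
  inversion_set (qroot D b J) (qpos D b J) Phi ->
  is_component (qpos D b J) Phi A ->
  is_component (qpos D b J) Phi B ->
  is_component (qpos D b J) Phi C ->
  comp_add (qroot D b J) (qpos D b J) Phi A B C ->
  forall i, supp_set b J C i <-> supp_set b J A i \/ supp_set b J B i.
Proof.
move=> HD HB HJ Hinv HA HB' HC Hadd i.
have [z0 [Hz0 Cz0]] : exists z, sumset (qroot D b J) A B z /\ C z.
  case: Hadd => [_ [[z Hz] [H|[_ [_ [_ [z' [Hz' Cz']]]]]]]].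
    by exists z; split => //; apply: H.
  by exists z'.
have [Rz0 [a0 [b0 [Aa0 [Bb0 ez0]]]]] := Hz0.
have Pos_of : forall (X : 'rV[R]_n -> Prop) x,
    is_component (qpos D b J) Phi X -> X x -> Pos b J x.
  by move=> X x HX Xx; apply: qpos_Pos (inv_pos Hinv (comp_Phi HX Xx)).
split.
- move=> [c [Cc sc]].
  case: (classic (same_set C A)) => [e|nCA].
    by left; exists c; split => //; apply/e.
  case: (classic (same_set C B)) => [e|nCB].
    by right; exists c; split => //; apply/e.
  have [_ [a [b' [Aa [Bb ec]]]]] := ZC HD HB Hinv HA HB' HC Hz0 Cz0 nCA nCB Cc.
  rewrite ec in sc.
  case: (supp_add_split HB (Pos_of _ _ HA Aa) (Pos_of _ _ HB' Bb) sc) => H.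
    by left; exists a.
  by right; exists b'.
- case => [[a [Aa sa]]|[y [By sy]]].
  + have R0 : qroot D b J (b0 + a0) by rewrite addrC -ez0.
    have C0 : C (b0 + a0) by rewrite addrC -ez0.
    case: (partner HD HB Hinv HB' HA HC Bb0 Aa0 R0 C0 Aa) => [[b' [Bb [Rba Cba]]]|Ca].
      exists (b' + a); split => //.
      exact: (supp_add_r HB (Pos_of _ _ HB' Bb) (Pos_of _ _ HA Aa) sa).
    by exists a.
  + have R0 : qroot D b J (a0 + b0) by rewrite -ez0.
    have C0 : C (a0 + b0) by rewrite -ez0.
    case: (partner HD HB Hinv HA HB' HC Aa0 Bb0 R0 C0 By) => [[a [Aa [Ray Cay]]]|Cy].
      exists (a + y); split => //.
      exact: (supp_add_r HB (Pos_of _ _ HA Aa) (Pos_of _ _ HB' By) sy).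
    by exists y.
Qed.
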